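(* For $i=1,\dots,n$ let $A_i\in\mathbb{R}^{m_i\times r}$, $b_i\in\mathbb{R}^{m_i}$ and let $X_i\subset\mathbb{R}^r$ be closed convex, $X=\bigcap_i X_i$. Suppose the set $\mathbf{X}^*=\{x\in X: A_ix-b_i\le0 \text{ (componentwise) for all } i\}$ is non-empty. Let $n$ agents communicate over a fixed directed strongly connected graph with nonnegative weights $a_{ij}$ ($a_{ij}>0$ iff $j\in N_i$), and let $\tau>0$. Let $x_i(t)\in\mathbb{R}^r$ evolve according to $$\dot x_i(t)=\sum_{j\in N_i}a_{ij}(x_j(t)-x_i(t))-\tau\Big(A_i^T(A_ix_i(t)-b_i)^+ + x_i(t)-P_{X_i}(x_i(t))\Big),\quad i=1,\dots,n.$$ Then there is a vector $x^*\in\mathbf{X}^*$ such that $\lim_{t\to\infty}x_i(t)=x^*$ for all $i$.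
   Context: For a vector $y=[y_1,\dots,y_k]^T$, $y^+=[\max(y_1,0),\dots,\max(y_k,0)]^T$. $P_{X_i}$ is the Euclidean projection onto $X_i$. *)

(* Defs.v *)
From HB Require Import structures.
From mathcomp Require Import all_boot all_order all_algebra.
From mathcomp Require Import all_classical all_reals all_analysis.
Set Implicit Arguments. Unset Strict Implicit. Unset Printing Implicit Defensive.
Import Order.TTheory GRing.Theory Num.Theory.
Import numFieldNormedType.Exports.
Local Open Scope classical_set_scope.
Local Open Scope ring_scope.

Definition sqnorm {R : realType} {r : nat} (v : 'cV[R]_r) : R :=
  \sum_(k < r) (v k 0) ^+ 2.

Definition convex_cV {R : realType} {r : nat} (S : set 'cV[R]_r) : Prop :=
  forall x y (l : R), S x -> S y -> 0 <= l -> l <= 1 ->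
    S (l *: x + (1 - l) *: y).

Definition is_proj {R : realType} {r : nat} (S : set 'cV[R]_r) (x p : 'cV[R]_r) : Prop :=
  S p /\ forall y, S y -> sqnorm (x - p) <= sqnorm (x - y).

(* P_S(x): the Euclidean projection (well defined when S is nonempty, closed
   and convex; an arbitrary default x otherwise) *)
Definition eproj {R : realType} {r : nat} (S : set 'cV[R]_r) (x : 'cV[R]_r) : 'cV[R]_r :=
  xget x [set p | is_proj S x p].

Definition pospart {R : realType} {m : nat} (y : 'cV[R]_m) : 'cV[R]_m :=
  map_mx (fun c => Num.max c 0) y.

(* Main.v *)
Require Import Defs.
From HB Require Import structures.
From mathcomp Require Import all_boot all_order all_algebra.
From mathcomp Require Import all_classical all_reals all_analysis.
From mathcomp Require Import ring lra.
Import Order.TTheory GRing.Theory Num.Theory.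
Import numFieldNormedType.Exports.
Local Open Scope classical_set_scope.
Local Open Scope ring_scope.
Set Implicit Arguments. Unset Strict Implicit. Unset Printing Implicit Defensive.
Section Helpers.
Variable R : realType.

Lemma sq_lt (d c : R) : 0 < c -> d ^+ 2 < c ^+ 2 -> `|d| < c.
Proof.
move=> c0 h; rewrite ltNge; apply/negP => hc.
have := real_normK (num_real d); have := normr_ge0 d; nra.
Qed.

Lemma abs_le_sq1 (d : R) : `|d| <= 1 + d ^+ 2.
Proof. have := real_normK (num_real d); have := normr_ge0 d; nra. Qed.

Lemma term_le_sum (I : finType) (F : I -> R) i :
  (forall j, 0 <= F j) -> F i <= \sum_j F j.
Proof. by move=> h; rewrite (bigD1 i) //= lerDl; apply: sumr_ge0. Qed.

Lemma small_eq0 (c : R) : (forall e, 0 < e -> `|c| < e) -> c = 0.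
Proof.
move=> h; case: (eqVneq c 0) => // hc.
by have := h `|c|; rewrite normr_gt0 hc ltxx => /(_ isT).
Qed.
Lemma norm3 (u v w : R) : `|u + v + w| <= `|u| + `|v| + `|w|.
Proof.
apply: le_trans (ler_normD _ _) _; rewrite lerD2r; exact: ler_normD.
Qed.
End Helpers.
Section Basic.
Variable R : realType.
Variable r : nat.
Implicit Types u v : 'cV[R]_r.

Definition dot u v : R := \sum_(k < r) u k 0 * v k 0.

Lemma sqnormE v : sqnorm v = dot v v.
Proof. by apply: eq_bigr => k _; rewrite expr2. Qed.

Lemma sqnorm_ge0 v : 0 <= sqnorm v.
Proof. by apply: sumr_ge0 => k _; exact: sqr_ge0. Qed.

Lemma entry_le_sqnorm v k : (v k 0) ^+ 2 <= sqnorm v.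
Proof.
rewrite /sqnorm (bigD1 k) //= lerDl; apply: sumr_ge0 => j _; exact: sqr_ge0.
Qed.

Lemma sqnorm_subZ u v (l : R) :
  sqnorm (u - l *: v) = sqnorm u - 2 * l * dot u v + l ^+ 2 * sqnorm v.
Proof.
rewrite /sqnorm /dot !mulr_sumr -sumrB -big_split /=.
by apply: eq_bigr => k _; rewrite !mxE; ring.
Qed.

Lemma proj_vi (S : set 'cV[R]_r) x p z :
  is_proj S x p -> convex_cV S -> S z -> dot (x - p) (z - p) <= 0.
Proof.
move=> [Sp pmin] cS Sz.
set c := dot (x - p) (z - p); set q := sqnorm (z - p).
have q0 : 0 <= q by exact: sqnorm_ge0.
have key : forall l, 0 < l -> l <= 1 -> 2 * c <= l * q.
  move=> l l0 l1.
  have := pmin _ (cS z p l Sz Sp (ltW l0) l1).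
  have -> : x - (l *: z + (1 - l) *: p) = (x - p) - l *: (z - p).
    by apply/matrixP => i j; rewrite !mxE; ring.
  rewrite sqnorm_subZ -/c -/q => H.
  have : 0 <= l * (l * q - 2 * c) by nra.
  by rewrite pmulr_rge0 // subr_ge0.
rewrite leNgt; apply/negP => c0.
pose l := Num.min 1 (c / (q + 1)).
have l0 : 0 < l by rewrite lt_min ltr01 divr_gt0 // ltr_wpDl.
have l1 : l <= 1 by rewrite ge_min lexx.
have lc : l <= c / (q + 1) by rewrite ge_min lexx orbT.
have := key l l0 l1.
have : l * (q + 1) <= c by rewrite -ler_pdivlMr ?ltr_wpDl.
nra.
Qed.
End Basic.
Section Perron.
Variable R : realType.

Lemma perron n (i0 : 'I_n) (a : 'I_n -> 'I_n -> R) :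
  (forall i j, 0 <= a i j) ->
  (forall i j, connect (fun i' j' => 0 < a i' j') i j) ->
  exists w : 'I_n -> R, (forall i, 0 < w i) /\
    forall j, \sum_i w i * a i j = w j * \sum_k a j k.
Proof.
move=> a0 conn.
pose d j := \sum_k a j k.
have d0 j : 0 <= d j by apply: sumr_ge0.
pose L : 'M[R]_n := \matrix_(i, j) (a i j - (i == j)%:R * d i).
have HL : L *m (const_mx 1 : 'cV[R]_n) = 0.
  apply/matrixP => i j; rewrite !mxE.
  under eq_bigr do rewrite !mxE mulr1.
  rewrite sumrB.
  have -> : \sum_k (i == k)%:R * d i = d i.
    rewrite (bigD1 i) //= eqxx mul1r big1 ?addr0 // => k /negbTE ik.
    by rewrite eq_sym ik mul0r.
  by rewrite subrr.
have : \det L^T == 0.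
  apply/det0P; exists (const_mx 1).
    apply/negP => /eqP /matrixP /(_ 0 i0); rewrite !mxE => /eqP; by rewrite oner_eq0.
  by rewrite -trmx_const -trmx_mul HL trmx0.
rewrite det_tr => /det0P [v vn0 vL].
pose u i : R := `|v 0 i|.
have u0 i : 0 <= u i by apply: normr_ge0.
have vLj j : \sum_i v 0 i * a i j = v 0 j * d j.
  have := congr1 (fun M : 'rV[R]_n => M 0 j) vL; rewrite !mxE.
  under eq_bigr do rewrite mxE mulrBr.
  rewrite sumrB.
  have -> : \sum_k v 0 k * ((k == j)%:R * d k) = v 0 j * d j.
    rewrite (bigD1 j) //= eqxx mul1r big1 ?addr0 // => k /negbTE ik.
    by rewrite ik mul0r mulr0.
  by move=> /eqP; rewrite subr_eq0 => /eqP.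
have h1 j : 0 <= \sum_i u i * a i j - u j * d j.
  rewrite subr_ge0 /u -(ger0_norm (d0 j)) -normrM -vLj.
  apply: le_trans (ler_norm_sum _ _ _) _.
  by apply: ler_sum => i _; rewrite normrM (ger0_norm (a0 _ _)).
have hs : \sum_j (\sum_i u i * a i j - u j * d j) = 0.
  rewrite sumrB exchange_big /=.
  by apply/eqP; rewrite subr_eq0; apply/eqP; apply: eq_bigr => i _; rewrite mulr_sumr.
have h2 j : \sum_i u i * a i j = u j * d j.
  by apply/eqP; rewrite -subr_eq0; apply/eqP; apply: (psumr_eq0P (fun j _ => h1 j) hs).
have prop k i : 0 < a i k -> u k = 0 -> u i = 0.
  move=> aik uk.
  have : \sum_i u i * a i k = 0 by rewrite h2 uk mul0r.
  move/psumr_eq0P => /(_ (fun i _ => mulr_ge0 (u0 i) (a0 i k)) i isT) /eqP.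
  by rewrite mulf_eq0 (gt_eqF aik) orbF => /eqP.
have [j0 vj0] : exists j, v 0 j != 0.
  apply/existsP; move: vn0; apply: contraR; rewrite negb_exists => /forallP H.
  by apply/eqP/matrixP => i j; rewrite ord1 mxE; apply/eqP; rewrite -[_ == _]negbK H.
exists u; split => [i|j]; last by rewrite h2.
rewrite lt_neqAle u0 andbT eq_sym; apply/eqP => ui.
have: u j0 = 0.
  have /connectP [p pp ip] := conn j0 i.
  elim: p j0 pp ip {vj0} => [|y p IH] x /= pp ip; first by rewrite -ip.
  move/andP: pp => [exy pp].
  exact: prop exy (IH _ pp ip).
by move/eqP; rewrite normr_eq0 (negbTE vj0).
Qed.
End Perron.
Section Topo.
Variable R : realType.

Lemma continuous_vec_mx m n : continuous (@vec_mx R m n).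
Proof.
move=> u A /nbhs_ballP[e /= e0 eA].
apply/nbhs_ballP; exists e => //= v [_ uv]; apply: eA; split => // i j.
by rewrite !mxE; exact: uv.
Qed.

Lemma box_compact m n (B : R) :
  compact [set M : 'M[R]_(m, n) | forall i j, `|M i j| <= B].
Proof.
have K'c : compact [set v : 'rV[R]_(m * n) | forall k, `[(- B), B]%classic (v 0 k)].
  by apply: (@rV_compact _ _ (fun=> `[(- B), B]%classic)) => _; exact: segment_compact.
have := continuous_compact (continuous_subspaceT (@continuous_vec_mx m n)) K'c.
congr compact; apply/seteqP; split => M /=.
  move=> [v vK <-] i j; have := vK (mxvec_index i j).
  by rewrite /= in_itv /= -ler_norml mxE.
move=> MB; exists (mxvec M); last by rewrite mxvecK.
by move=> k; case/mxvec_indexP: k => i j; rewrite /= in_itv /= mxvecE -ler_norml.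
Qed.

Lemma continuous_sum_fun (T : topologicalType) I (s : seq I) (g : I -> T -> R) :
  (forall k, continuous (g k)) -> continuous (fun y => \sum_(k <- s) g k y).
Proof.
move=> gc; elim: s => [|k s IH].
  by under eq_fun do rewrite big_nil; exact: cst_continuous.
under eq_fun do rewrite big_cons.
by move=> y; apply: continuousD; [exact: gc|exact: IH].
Qed.

Lemma continuous_sqnorm_sub r (x : 'cV[R]_r) :
  continuous (fun y : 'cV[R]_r => sqnorm (x - y)).
Proof.
rewrite /sqnorm; apply: continuous_sum_fun => k y.
under eq_fun do rewrite !mxE expr2.
have g : continuous (fun y : 'cV[R]_r => x k 0 - y k 0).
  by move=> z; apply: continuousB; [exact: cst_continuous|exact: coord_continuous].
exact: (continuousM (g y) (g y)).
Qed.

Lemma proj_exists r (S : set 'cV[R]_r) x : closed S -> S !=set0 ->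
  exists p, is_proj S x p.
Proof.
move=> cS [z Sz].
pose f y := sqnorm (x - y).
pose c := f z.
pose K := S `&` [set y | f y <= c].
pose B := \sum_k `|x k 0| + 1 + c.
have Kbox : K `<=` [set M : 'cV[R]_r | forall i j, `|M i j| <= B].
  move=> y [_ fy] i j; have -> : j = 0 by rewrite !ord1.
  have h1 := entry_le_sqnorm (x - y) i; rewrite !mxE in h1.
  have h2 : `|x i 0| <= \sum_k `|x k 0|.
    by rewrite (bigD1 i) //= lerDl; apply: sumr_ge0.
  have h3 : `|x i 0 - y i 0| <= 1 + (x i 0 - y i 0) ^+ 2.
    rewrite -[(x i 0 - y i 0) ^+ 2]ger0_norm ?sqr_ge0 // normrX.
    have := normr_ge0 (x i 0 - y i 0); nra.
  have : `|y i 0| <= `|x i 0| + `|x i 0 - y i 0|.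
    have e : y i 0 = x i 0 - (x i 0 - y i 0) by ring.
    by rewrite {1}e; exact: ler_normB.
  rewrite /B; move: fy => /=; rewrite /f => fy; lra.
have Kc : compact K.
  apply: subclosed_compact Kbox; last exact: box_compact.
  apply: closedI => //.
  have := (continuous_closedP _).1 (@continuous_sqnorm_sub r x) _ (@closed_le _ c).
  by congr closed.
have K0 : K !=set0 by exists z; split => //=; rewrite /f lexx.
have [p pK pmin] := compact_EVT_min K0 Kc
   (continuous_subspaceT (@continuous_sqnorm_sub r x)).
rewrite inE in pK; case: pK => Sp fp.
exists p; split => // y Sy.
case: (lerP (f y) c) => fy; first by apply: pmin; rewrite inE.
apply: le_trans (ltW fy); exact: fp.
Qed.

Lemma eproj_is_proj r (S : set 'cV[R]_r) x : closed S -> S !=set0 ->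
  is_proj S x (eproj S x).
Proof.
move=> cS S0; rewrite /eproj; case: xgetP => //.
by move=> /(_ _) H; have [p /H] := proj_exists x cS S0.
Qed.
End Topo.
Section Deriv.
Variable R : realType.

Lemma is_derive_sumf n (F : 'I_n -> R -> R) (dF : 'I_n -> R) (t : R) :
  (forall i, is_derive t 1 (F i) (dF i)) ->
  is_derive t 1 (fun s => \sum_i F i s) (\sum_i dF i).
Proof.
move=> H; have := @is_derive_sum R R^o R^o n F t 1 dF H.
by rewrite fct_sumE.
Qed.

Lemma is_derive_sqr (f : R -> R) (t df c : R) : is_derive t 1 f df ->
  is_derive t 1 (fun s => (f s - c) ^+ 2) (2 * (f t - c) * df).
Proof.
move=> hf.
have h1 : is_derive t 1 (f - cst c) (df - 0) by apply: is_deriveB.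
have h2 := is_deriveM h1 h1.
have -> : (fun s => (f s - c) ^+ 2) = (f - cst c) * (f - cst c).
  by apply/funext => s /=; rewrite expr2.
apply: is_derive_eq h2 _; rewrite /= subr0 /GRing.scale /=.
have -> : (f - cst c) t = f t - c by [].
ring.
Qed.

Lemma is_derive_scal (f : R -> R) (t df k : R) : is_derive t 1 f df ->
  is_derive t 1 (fun s => k * f s) (k * df).
Proof.
move=> hf; have := @is_deriveZ R R^o R^o f k t 1 df hf.
by rewrite /GRing.scale.
Qed.

Lemma is_derive_coord r (y : R -> 'cV[R]_r) (t : R) dy k :
  is_derive t 1 y dy -> is_derive t 1 (fun s => y s k 0) (dy k 0).
Proof.
move=> hy; have dy' : derivable y t 1 := @ex_derive _ _ _ _ _ _ _ hy.
have := (derivable_mxP y t 1).1 dy' k 0 => dk.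
apply: DeriveDef => //.
have := derive_mx dy'; rewrite derive_val => ->.
by rewrite mxE.
Qed.

Lemma nincr_of_deriv (f df : R -> R) (c : R) :
  (forall t, c < t -> is_derive t 1 f (df t)) ->
  (forall t, c < t -> df t <= 0) ->
  forall s t, c < s -> s <= t -> f t <= f s.
Proof.
move=> hd hneg s t cs st.
apply: (@ler0_derive1_nincry R f s) => //.
- move=> u; rewrite in_itv /= andbT => su.
  have hu := hd u (lt_trans cs su); exact: (@ex_derive _ _ _ _ _ _ _ hu).
- move=> u; rewrite in_itv /= andbT => su.
  have hu := hd u (lt_trans cs su).
  by rewrite derive1E derive_val; apply: hneg; exact: lt_trans cs su.
- apply: derivable_within_continuous => u; rewrite in_itv /= andbT => su.
  have hu := hd u (lt_le_trans cs su); exact: (@ex_derive _ _ _ _ _ _ _ hu).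
Qed.
End Deriv.
Section DotLemmas.
Variable R : realType.
Variable r : nat.
Implicit Types u v y : 'cV[R]_r.

Lemma dotBr y u v : dot y (u - v) = dot y u - dot y v.
Proof. by rewrite /dot -sumrB; apply: eq_bigr => k _; rewrite !mxE mulrBr. Qed.

Lemma dotDr y u v : dot y (u + v) = dot y u + dot y v.
Proof. by rewrite /dot -big_split; apply: eq_bigr => k _; rewrite !mxE mulrDr. Qed.

Lemma dotZr y (c : R) u : dot y (c *: u) = c * dot y u.
Proof. by rewrite /dot mulr_sumr; apply: eq_bigr => k _; rewrite !mxE mulrCA. Qed.

Lemma dot_sumr y n (c : 'I_n -> R) (v : 'I_n -> 'cV[R]_r) :
  dot y (\sum_j c j *: v j) = \sum_j c j * dot y (v j).
Proof.
rewrite /dot; under eq_bigr do rewrite summxE mulr_sumr.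
rewrite exchange_big /=; apply: eq_bigr => j _; rewrite mulr_sumr.
by apply: eq_bigr => k _; rewrite !mxE mulrCA.
Qed.

Lemma dot_trmul p (M : 'M[R]_(p, r)) y (u : 'cV[R]_p) :
  dot y (M^T *m u) = dot (M *m y) u.
Proof.
rewrite /dot; under eq_bigr do rewrite !mxE mulr_sumr.
under [RHS]eq_bigr do rewrite !mxE mulr_suml.
rewrite exchange_big /=; apply: eq_bigr => l _; apply: eq_bigr => k _.
by rewrite !mxE; ring.
Qed.

Lemma dot_sub_half u v : dot u (v - u) = (sqnorm v - sqnorm u - sqnorm (v - u)) / 2.
Proof.
rewrite /dot /sqnorm -!sumrB mulr_suml; apply: eq_bigr => k _; rewrite !mxE.
by field.
Qed.

Lemma maxr0E (c : R) : Num.max c 0 = if c < 0 then 0 else c.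
Proof. by []. Qed.

Lemma pos_ineq p (M : 'M[R]_(p, r)) (c : 'cV[R]_p) y z :
  (forall k, (M *m z - c) k 0 <= 0) ->
  sqnorm (pospart (M *m y - c)) <= dot (y - z) (M^T *m pospart (M *m y - c)).
Proof.
move=> hz; rewrite dot_trmul /dot /sqnorm; apply: ler_sum => l _.
have := hz l; rewrite !mxE.
set Az := \sum_j _; set Ay := \sum_j _.
have -> : \sum_j M l j * (y - z) j 0 = Ay - Az.
  by rewrite /Ay /Az -sumrB; apply: eq_bigr => j _; rewrite !mxE; ring.
move=> hz'.
rewrite maxr0E; case: (ltrP (Ay - c l 0) 0) => h.
  by rewrite expr2 !mulr0.
nra.
Qed.

Lemma proj_ineq (S : set 'cV[R]_r) y p z :
  is_proj S y p -> convex_cV S -> S z -> sqnorm (y - p) <= dot (y - z) (y - p).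
Proof.
move=> hp cS Sz; have := proj_vi hp cS Sz.
have -> : dot (y - z) (y - p) = sqnorm (y - p) - dot (y - p) (z - p).
  rewrite sqnormE /dot -sumrB; apply: eq_bigr => k _; rewrite !mxE; ring.
lra.
Qed.
End DotLemmas.
Section Cluster.
Variable R : realType.

Lemma cluster_exists (N M : nat) (Sx : R -> 'M[R]_(N, M)) (g : R -> R) (Bd : R) :
  (forall t, 1 <= t -> forall i j, `|Sx t i j| <= Bd) ->
  (forall T e, 1 <= T -> 0 < e -> exists t, T <= t /\ g t < e) ->
  exists p : 'M[R]_(N, M), forall T e d, 1 <= T -> 0 < e -> 0 < d ->
    exists t, T <= t /\ g t < e /\ forall i j, `|Sx t i j - p i j| < d.
Proof.
move=> hb hg.
pose D := [set q : R * R | 1 <= q.1 /\ 0 < q.2].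
pose B (q : R * R) := [set t | q.1 <= t /\ g t < q.2].
have FF : Filter (filter_from D B).
  apply: filter_from_filter; first by exists (1, 1); split => //=.
  move=> [T1 e1] [T2 e2] [/= h1 h1'] [/= h2 h2'].
  exists (Num.max T1 T2, Num.min e1 e2).
    by split => /=; [rewrite le_max h1|rewrite lt_min h1' h2'].
  move=> t [/=]; rewrite ge_max lt_min => /andP[t1 t2] /andP[g1 g2].
  by split; split.
have PF : ProperFilter (filter_from D B).
  apply: filter_from_proper => -[T e] [/= T1 e0].
  by have [t [Tt gt]] := hg T e T1 e0; exists t.
pose K := [set Mx : 'M[R]_(N, M) | forall i j, `|Mx i j| <= Bd].
have FK : (Sx @ filter_from D B) K.
  exists (1, 1); first by split => /=.
  by move=> t [/= t1 _]; exact: hb.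
have [p [_ cp]] := @box_compact R N M Bd (Sx @ filter_from D B) _ FK.
exists p => T e d T1 e0 d0.
pose A := Sx @` B (T, e).
pose Bp := [set Mx : 'M[R]_(N, M) | forall i j, `|Mx i j - p i j| < d].
have hA : (Sx @ filter_from D B) A.
  exists (T, e); first by split.
  by move=> t Bt; exists t.
have hB : nbhs p Bp.
  apply/nbhs_ballP; exists d => //= Mx [_ hM] i j.
  by rewrite distrC; exact: hM.
have [_ [[t Bt <-] ht]] := cp A Bp hA hB.
by exists t; case: Bt => /= Tt gt; split.
Qed.
End Cluster.
Section Main.
Variables (R : realType) (n r : nat) (m : 'I_n -> nat)
  (A : forall i : 'I_n, 'M[R]_(m i, r)) (b : forall i : 'I_n, 'cV[R]_(m i))
  (X : 'I_n -> set 'cV[R]_r)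
  (a : 'I_n -> 'I_n -> R) (tau : R)
  (x : 'I_n -> R -> 'cV[R]_r) (w : 'I_n -> R).
Hypotheses (cX : forall i, closed (X i)) (vX : forall i, convex_cV (X i))
  (a0 : forall i j, 0 <= a i j)
  (conn : forall i j, connect (fun i' j' => 0 < a i' j') i j)
  (tau0 : 0 < tau)
  (wpos : forall i, 0 < w i)
  (wbal : forall j, \sum_i w i * a i j = w j * \sum_k a j k).

Definition P i (t : R) := eproj (X i) (x i t).
Definition D i (t : R) : 'cV[R]_r :=
  \sum_(j < n | 0 < a i j) a i j *: (x j t - x i t)
        - tau *: ((A i)^T *m pospart (A i *m x i t - b i)
                  + (x i t - eproj (X i) (x i t))).

Hypothesis hder : forall i (t : R), 0 < t -> is_derive t 1 (x i) (D i t).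

Definition feas (z : 'cV[R]_r) := (forall i, X i z) /\
  forall i (k : 'I_(m i)), (A i *m z - b i) k 0 <= 0.

Definition V (z : 'cV[R]_r) (t : R) := \sum_i w i * sqnorm (x i t - z).
Definition Q (t : R) := \sum_i \sum_j w i * a i j * sqnorm (x j t - x i t).
Definition Z (t : R) := \sum_i w i * (sqnorm (pospart (A i *m x i t - b i))
                                 + sqnorm (x i t - P i t)).
Definition G (t : R) := Q t + 2 * tau * Z t.

Lemma D_alt i (t : R) : D i t = \sum_j a i j *: (x j t - x i t)
        - tau *: ((A i)^T *m pospart (A i *m x i t - b i) + (x i t - P i t)).
Proof.
rewrite /D big_mkcond /=; congr (_ - _); apply: eq_bigr => j _.
case: ifP => // h; have -> : a i j = 0; last by rewrite scale0r.
by apply/eqP; move: (a0 i j); rewrite le_eqVlt h orbF eq_sym.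
Qed.

Lemma V_ge0 (z : 'cV[R]_r) (t : R) : 0 <= V z t.
Proof. by apply: sumr_ge0 => i _; apply: mulr_ge0; [exact: ltW|exact: sqnorm_ge0]. Qed.

Lemma Q_ge0 (t : R) : 0 <= Q t.
Proof.
apply: sumr_ge0 => i _; apply: sumr_ge0 => j _.
by apply: mulr_ge0; [apply: mulr_ge0; [exact: ltW|exact: a0]|exact: sqnorm_ge0].
Qed.

Lemma Z_ge0 (t : R) : 0 <= Z t.
Proof.
apply: sumr_ge0 => i _; apply: mulr_ge0; first exact: ltW.
by apply: addr_ge0; exact: sqnorm_ge0.
Qed.

Lemma G_ge0 (t : R) : 0 <= G t.
Proof. by apply: addr_ge0; [exact: Q_ge0|apply: mulr_ge0; [apply: mulr_ge0 =>//; exact: ltW|exact: Z_ge0]]. Qed.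

Lemma V_der (z : 'cV[R]_r) (t : R) : 0 < t ->
  is_derive t 1 (V z) (\sum_i w i * (2 * dot (x i t - z) (D i t))).
Proof.
move=> t0; apply: is_derive_sumf => i; apply: is_derive_scal.
have -> : (fun s => sqnorm (x i s - z)) = fun s => \sum_k (x i s k 0 - z k 0) ^+ 2.
  by apply/funext => s; rewrite /sqnorm; apply: eq_bigr => k _; rewrite !mxE.
have -> : 2 * dot (x i t - z) (D i t) = \sum_k 2 * (x i t k 0 - z k 0) * D i t k 0.
  by rewrite /dot mulr_sumr; apply: eq_bigr => k _; rewrite !mxE mulrA.
apply: is_derive_sumf => k; apply: is_derive_sqr.
exact: is_derive_coord (hder i t0).
Qed.

Lemma key (z : 'cV[R]_r) (t : R) : feas z ->
  \sum_i w i * (2 * dot (x i t - z) (D i t)) <= - G t.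
Proof.
move=> [zX zA].
pose y i := x i t - z.
have yd i j : x j t - x i t = y j - y i.
  by apply/matrixP => k l; rewrite !mxE; ring.
pose S1 := \sum_i w i * \sum_j a i j * dot (y i) (y j - y i).
pose S2 i := dot (y i) ((A i)^T *m pospart (A i *m x i t - b i)) + dot (y i) (x i t - P i t).
have E0 : \sum_i w i * (2 * dot (x i t - z) (D i t)) =
          2 * S1 - 2 * tau * \sum_i w i * S2 i.
  rewrite /S1 !mulr_sumr -sumrB; apply: eq_bigr => i _.
  rewrite D_alt dotBr dot_sumr dotZr dotDr /S2 -/(y i).
  under eq_bigr => j0 _ do rewrite yd.
  ring.
have E1 i : 2 * (w i * \sum_j a i j * dot (y i) (y j - y i)) =
    \sum_j (w i * a i j * sqnorm (y j)) - \sum_j (w i * a i j * sqnorm (y i))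
    - \sum_j w i * a i j * sqnorm (y j - y i).
  rewrite -!sumrB !mulr_sumr; apply: eq_bigr => j _; rewrite dot_sub_half.
  by field.
have EA : \sum_i \sum_j (w i * a i j * sqnorm (y j)) =
          \sum_i \sum_j (w i * a i j * sqnorm (y i)).
  rewrite exchange_big /=; apply: eq_bigr => jj _.
  have -> : \sum_i w i * a i jj * sqnorm (y jj) = (\sum_i w i * a i jj) * sqnorm (y jj).
    by rewrite mulr_suml.
  by rewrite wbal -mulr_suml -mulr_sumr.
have EQ : Q t = \sum_i \sum_j w i * a i j * sqnorm (y j - y i).
  by apply: eq_bigr => i _; apply: eq_bigr => j _; rewrite yd.
have ES1 : 2 * S1 = - Q t.
  rewrite /S1 mulr_sumr (eq_bigr _ (fun i _ => E1 i)) !sumrB EA EQ.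
  by rewrite subrr sub0r.
have ES2 : Z t <= \sum_i w i * S2 i.
  apply: ler_sum => i _; apply: ler_wpM2l; first exact: ltW.
  apply: lerD.
    exact: pos_ineq (zA i).
  have hp : is_proj (X i) (x i t) (P i t).
    by apply: eproj_is_proj => //; exists z.
  exact: (proj_ineq hp (@vX i) (zX i)).
rewrite E0 ES1 /G.
have := ler_wpM2l (ltW tau0) ES2; lra.
Qed.

Lemma V_nincr z : feas z -> forall s t, 0 < s -> s <= t -> V z t <= V z s.
Proof.
move=> fz s t s0 st.
apply: (@nincr_of_deriv R (V z)
   (fun u => \sum_i w i * (2 * dot (x i u - z) (D i u))) 0) => // u u0.
  exact: V_der.
have := key u fz; have := G_ge0 u; lra.
Qed.

Lemma G_small z : feas z -> forall T e, 1 <= T -> 0 < e ->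
  exists t, T <= t /\ G t < e.
Proof.
move=> fz T e T1 e0.
case: (pselect (exists t, T <= t /\ G t < e)) => // hn; exfalso.
have hG t : T <= t -> e <= G t.
  by move=> Tt; rewrite leNgt; apply/negP => h; apply: hn; exists t.
pose U := V z + (fun t => e * t).
have hU : forall s t, T < s -> s <= t -> U t <= U s.
  apply: (@nincr_of_deriv R U
    (fun u => \sum_i w i * (2 * dot (x i u - z) (D i u)) + e * 1) T) => u Tu.
    apply: is_deriveD; first by apply: V_der; lra.
  have := key u fz; have := hG u (ltW Tu); lra.
pose s := T + 1.
pose t := s + V z s / e + 1.
have Vs0 := V_ge0 z s.
have Ve0 : 0 <= V z s / e by apply: divr_ge0 => //; exact: ltW.
have st : s <= t by rewrite /t; lra.
have Ts : T < s by rewrite /s; lra.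
have h1 : forall u, U u = V z u + e * u by [].
have := hU s t Ts st; rewrite !h1.
have eq : e * t = e * s + V z s + e.
  rewrite /t; field; exact: lt0r_neq0.
rewrite eq; have := V_ge0 z t; lra.
Qed.

Lemma x_bound z : feas z -> exists Bd, forall t, 1 <= t -> forall i k, `|x i t k 0| <= Bd.
Proof.
move=> fz.
exists (\sum_k `|z k 0| + 1 + \sum_j V z 1 / w j) => t t1 i k.
have hw := wpos i.
have h1 : w i * sqnorm (x i t - z) <= V z t.
  apply: (@term_le_sum R _ (fun j => w j * sqnorm (x j t - z))) => j.
  by apply: mulr_ge0; [exact: ltW|exact: sqnorm_ge0].
have h2 : V z t <= V z 1 := V_nincr fz ltr01 t1.
have h3 := entry_le_sqnorm (x i t - z) k; rewrite !mxE in h3.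
have h4 : (x i t k 0 - z k 0) ^+ 2 <= V z 1 / w i.
  rewrite ler_pdivlMr //; nra.
have h5 : V z 1 / w i <= \sum_j V z 1 / w j.
  apply: (@term_le_sum R _ (fun j => V z 1 / w j)) => j.
  by apply: divr_ge0; [exact: V_ge0|exact: ltW].
have h6 := abs_le_sq1 (x i t k 0 - z k 0).
have h7 : `|z k 0| <= \sum_k `|z k 0|.
  by apply: (@term_le_sum R _ (fun k => `|z k 0|)) => j.
have h8 : `|x i t k 0| <= `|z k 0| + `|x i t k 0 - z k 0|.
  have e : x i t k 0 = z k 0 + (x i t k 0 - z k 0) by ring.
  by rewrite {1}e; exact: ler_normD.
lra.
Qed.

Lemma Q_term t i j : w i * a i j * sqnorm (x j t - x i t) <= G t.
Proof.
apply: le_trans (_ : Q t <= G t); last first.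
  rewrite /G lerDl; apply: mulr_ge0; [apply: mulr_ge0 => //; exact: ltW|exact: Z_ge0].
apply: le_trans (@term_le_sum R _ (fun i => \sum_j w i * a i j * sqnorm (x j t - x i t)) i _).
  apply: (@term_le_sum R _ (fun j => w i * a i j * sqnorm (x j t - x i t))) => k.
  by apply: mulr_ge0; [apply: mulr_ge0; [exact: ltW|exact: a0]|exact: sqnorm_ge0].
move=> k; apply: sumr_ge0 => l _.
by apply: mulr_ge0; [apply: mulr_ge0; [exact: ltW|exact: a0]|exact: sqnorm_ge0].
Qed.

Lemma Z_term t i : 2 * tau * (w i * (sqnorm (pospart (A i *m x i t - b i))
                                 + sqnorm (x i t - P i t))) <= G t.
Proof.
apply: le_trans (_ : 2 * tau * Z t <= G t); last by rewrite /G lerDr; exact: Q_ge0.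
apply: ler_wpM2l; first by apply: mulr_ge0 => //; exact: ltW.
apply: (@term_le_sum R _ (fun i => w i * (sqnorm (pospart (A i *m x i t - b i))
                                 + sqnorm (x i t - P i t)))) => j.
apply: mulr_ge0; first exact: ltW.
by apply: addr_ge0; exact: sqnorm_ge0.
Qed.

Lemma main_conv (i0 : 'I_n) z0 : feas z0 ->
  exists xs, feas xs /\ forall i, x i t @[t --> +oo] --> xs.
Proof.
move=> f0.
have [Bd hBd] := x_bound f0.
pose Sx t : 'M[R]_(n, r) := \matrix_(i, k) x i t k 0.
have [p hp] : exists p : 'M[R]_(n, r), forall T e d, 1 <= T -> 0 < e -> 0 < d ->
    exists t, T <= t /\ G t < e /\ forall i j, `|Sx t i j - p i j| < d.
  apply: (@cluster_exists R n r Sx G Bd); last exact: (G_small f0).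
  by move=> t t1 i k; rewrite mxE; exact: hBd.
have approx : forall T e d, 1 <= T -> 0 < e -> 0 < d ->
    exists t, T <= t /\ G t < e /\ forall i k, `|x i t k 0 - p i k| < d.
  move=> T e d T1 e0 d0; have [t [Tt [Gt ht]]] := hp T e d T1 e0 d0.
  by exists t; split => //; split => // i k; have := ht i k; rewrite mxE.
have edge : forall i j, 0 < a i j -> forall k, p i k = p j k.
  move=> i j aij k; apply/eqP; rewrite -subr_eq0; apply/eqP; apply: small_eq0 => η η0.
  have c0 : 0 < w i * a i j by apply: mulr_gt0.
  have e0 : 0 < w i * a i j * (η / 2) ^+ 2.
    by apply: mulr_gt0 => //; apply: exprn_gt0; apply: divr_gt0.
  have d0 : 0 < η / 4 by apply: divr_gt0.
  have [t [_ [Gt ht]]] := approx 1 _ _ (lexx 1) e0 d0.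
  have hq := Q_term t i j.
  have hs := entry_le_sqnorm (x j t - x i t) k; rewrite !mxE in hs.
  have hd : (x j t k 0 - x i t k 0) ^+ 2 < (η / 2) ^+ 2.
    rewrite -(ltr_pM2l c0); apply: le_lt_trans Gt; apply: le_trans hq.
    by rewrite ler_pM2l.
  have h2 := sq_lt (divr_gt0 η0 (ltr0Sn _ 1)) hd.
  have hi := ht i k; have hj := ht j k.
  have tri : `|p i k - p j k| <=
      `|x i t k 0 - p i k| + `|x j t k 0 - x i t k 0| + `|x j t k 0 - p j k|.
    have -> : p i k - p j k =
       - (x i t k 0 - p i k) + - (x j t k 0 - x i t k 0) + (x j t k 0 - p j k) by ring.
    by apply: le_trans (norm3 _ _ _) _; rewrite !normrN.
  lra.
have cons : forall i j k, p i k = p j k.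
  move=> i j k; have /connectP [s ps ->] := conn i j.
  elim: s i ps => [|y s IH] i /= ps //.
  by move/andP: ps => [e ps]; rewrite (edge _ _ e); exact: IH.
pose xs : 'cV[R]_r := \col_k p i0 k.
have pxs : forall i k, p i k = xs k 0 by move=> i k; rewrite mxE; exact: cons.
have xsX : forall i, X i xs.
  move=> i; apply: (@cX i) => B /nbhs_ballP [δ δ0 hB].
  have e0 : 0 < 2 * tau * w i * (δ / 2) ^+ 2.
    by apply: mulr_gt0; [apply: mulr_gt0; [apply: mulr_gt0|]|apply: exprn_gt0; apply: divr_gt0].
  have d0 : 0 < δ / 2 by apply: divr_gt0.
  have [t [_ [Gt ht]]] := approx 1 _ _ (lexx 1) e0 d0.
  have hz := Z_term t i.
  have hpr : is_proj (X i) (x i t) (P i t).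
    by apply: eproj_is_proj => //; exists z0; case: f0.
  exists (P i t); split; first exact: hpr.1.
  apply: hB; split => // k l; rewrite [l]ord1.
  rewrite /ball /=.
  have hs := entry_le_sqnorm (x i t - P i t) k; rewrite !mxE in hs.
  have hpos := sqnorm_ge0 (pospart (A i *m x i t - b i)).
  have c0 : 0 < 2 * tau * w i by apply: mulr_gt0 => //; apply: mulr_gt0.
  have hsum : sqnorm (pospart (A i *m x i t - b i)) + sqnorm (x i t - P i t) < (δ / 2) ^+ 2.
    rewrite -(ltr_pM2l c0); apply: le_lt_trans Gt; apply: le_trans hz.
    by rewrite mulrA.
  have hsq : (x i t k 0 - P i t k 0) ^+ 2 < (δ / 2) ^+ 2 by lra.
  have h1 := sq_lt d0 hsq.
  have h2 := ht i k; rewrite pxs in h2.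
  have tri : `|xs k 0 - P i t k 0| <= `|x i t k 0 - xs k 0| + `|x i t k 0 - P i t k 0|.
    have -> : xs k 0 - P i t k 0 = - (x i t k 0 - xs k 0) + (x i t k 0 - P i t k 0) by ring.
    by apply: le_trans (ler_normD _ _) _; rewrite normrN.
  lra.
have xsA : forall i (k : 'I_(m i)), (A i *m xs - b i) k 0 <= 0.
  move=> i k; rewrite leNgt; apply/negP => cpos.
  set cs := (A i *m xs - b i) k 0 in cpos.
  pose Sa := \sum_l `|A i k l|.
  have Sa0 : 0 <= Sa by apply: sumr_ge0.
  pose d := cs / (2 * (Sa + 1)).
  have d0 : 0 < d by apply: divr_gt0 => //; apply: mulr_gt0 => //; lra.
  have hd : d * (2 * (Sa + 1)) = cs by rewrite /d; field; lra.
  have c0 : 0 < 2 * tau * w i by apply: mulr_gt0 => //; apply: mulr_gt0.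
  have e0 : 0 < 2 * tau * w i * (cs / 2) ^+ 2.
    by apply: mulr_gt0 => //; apply: exprn_gt0; apply: divr_gt0.
  have [t [_ [Gt ht]]] := approx 1 _ _ (lexx 1) e0 d0.
  have hz := Z_term t i.
  pose ct := (A i *m x i t - b i) k 0.
  have hs : ct ^+ 2 <= sqnorm (pospart (A i *m x i t - b i)) \/ ct < 0.
    case: (ltrP ct 0) => hc; [by right|left].
    have := entry_le_sqnorm (pospart (A i *m x i t - b i)) k.
    by rewrite /pospart mxE -/ct maxr0E ltNge hc.
  have hdiff : ct - cs = \sum_l A i k l * (x i t l 0 - xs l 0).
    rewrite /ct /cs !mxE.
    rewrite [LHS](_ : _ = \sum_j A i k j * x i t j 0 - \sum_j A i k j * xs j 0); last by ring.
    by rewrite -sumrB; apply: eq_bigr => l _; ring.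
  have hb : `|ct - cs| <= Sa * d.
    rewrite hdiff; apply: le_trans (ler_norm_sum _ _ _) _.
    rewrite /Sa mulr_suml; apply: ler_sum => l _; rewrite normrM.
    apply: ler_wpM2l; first exact: normr_ge0.
    by have := ht i l; rewrite pxs => /ltW.
  have hlo : - `|ct - cs| <= ct - cs.
    by have := lexx `|ct - cs|; rewrite ler_norml => /andP[].
  have hsp := sqnorm_ge0 (x i t - P i t).
  have hsum : sqnorm (pospart (A i *m x i t - b i)) + sqnorm (x i t - P i t) < (cs / 2) ^+ 2.
    rewrite -(ltr_pM2l c0); apply: le_lt_trans Gt; apply: le_trans hz.
    by rewrite mulrA.
  have hct : cs / 2 < ct by nra.
  case: hs => hs; last by lra.
  nra.
exists xs; split; first by split.
move=> i B /nbhs_ballP [η η0 hB].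
pose W := \sum_j w j.
have W0 : 0 <= W by apply: sumr_ge0 => j _; exact: ltW.
have r0 : 0 <= r%:R :> R by exact: ler0n.
have wi := wpos i.
have rW0 : 0 <= r%:R * W by exact: mulr_ge0.
pose q := w i * η ^+ 2 / (r%:R * W + 1).
have q0 : 0 < q by apply: divr_gt0; [apply: mulr_gt0 => //; exact: exprn_gt0|lra].
have hq : q * (r%:R * W + 1) = w i * η ^+ 2 by rewrite /q; field; lra.
pose δ := Num.min 1 q.
have δ0 : 0 < δ by rewrite lt_min ltr01 q0.
have δ1 : δ <= 1 by rewrite ge_min lexx.
have δq : δ <= q by rewrite ge_min lexx orbT.
have [t0 [t01 [_ ht0]]] := approx 1 1 δ (lexx 1) ltr01 δ0.
have hV0 : V xs t0 < w i * η ^+ 2.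
  apply: (@le_lt_trans _ _ (\sum_j w j * (r%:R * δ))).
    apply: ler_sum => j _; apply: ler_wpM2l; first exact: ltW.
    rewrite /sqnorm; apply: le_trans (_ : \sum_(k < r) δ <= _); last first.
      by rewrite sumr_const card_ord mulr_natl.
    apply: ler_sum => k _; rewrite !mxE.
    have := ht0 j k; rewrite pxs => hk.
    have := real_normK (num_real (x j t0 k 0 - xs k 0)).
    have := normr_ge0 (x j t0 k 0 - xs k 0); rewrite pxs; nra.
  rewrite -mulr_suml -/W.
  have : W * (r%:R * δ) <= W * (r%:R * q).
    by apply: ler_wpM2l => //; apply: ler_wpM2l.
  nra.
rewrite nbhs_filterE; exists t0; split; first exact: num_real.
move=> t tt0; apply: hB; split => // k l; rewrite [l]ord1 /ball /=.
have hVt : V xs t <= V xs t0 by apply: (V_nincr (conj xsX xsA)); lra.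
have h1 : w i * sqnorm (x i t - xs) <= V xs t.
  apply: (@term_le_sum R _ (fun j => w j * sqnorm (x j t - xs))) => j.
  by apply: mulr_ge0; [exact: ltW|exact: sqnorm_ge0].
have h3 := entry_le_sqnorm (x i t - xs) k; rewrite !mxE pxs in h3.
have h4 : (x i t k 0 - xs k 0) ^+ 2 < η ^+ 2.
  rewrite -(ltr_pM2l wi); nra.
rewrite distrC; exact: sq_lt h4.
Qed.
End Main.

Unset Implicit Arguments.
Set Strict Implicit.

Theorem theorem6 (R : realType) (n r : nat) (m : 'I_n -> nat)
  (A : forall i : 'I_n, 'M[R]_(m i, r)) (b : forall i : 'I_n, 'cV[R]_(m i))
  (X : 'I_n -> set 'cV[R]_r)
  (a : 'I_n -> 'I_n -> R) (tau : R)
  (x : 'I_n -> R -> 'cV[R]_r) :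
  (forall i, closed (X i)) ->
  (forall i, convex_cV (X i)) ->
  (exists z : 'cV[R]_r, (forall i, X i z) /\
      forall i (k : 'I_(m i)), (A i *m z - b i) k 0 <= 0) ->
  (forall i j, 0 <= a i j) ->
  (forall i j, connect (fun i' j' => 0 < a i' j') i j) ->
  0 < tau ->
  (forall i (t : R), 0 < t ->
     is_derive t 1 (x i)
       (\sum_(j < n | 0 < a i j) a i j *: (x j t - x i t)
        - tau *: ((A i)^T *m pospart (A i *m x i t - b i)
                  + (x i t - eproj (X i) (x i t))))) ->
  exists xs : 'cV[R]_r,
    ((forall i, X i xs) /\ forall i (k : 'I_(m i)), (A i *m xs - b i) k 0 <= 0) /\
    forall i, x i t @[t --> +oo] --> xs.
Proof.
move=> cX vX [z0 [z0X z0A]] a0 conn tau0 hder.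
case: (ltnP 0 n) => hn; last first.
  exists z0; split; first by split.
  by move=> i; have := ltn_ord i; rewrite ltnNge (leq_trans hn (leq0n _)) ?leqNgt.
pose i0 := Ordinal hn.
have [w [wpos wbal]] := perron i0 a0 conn.
exact: (@main_conv R n r m A b X a tau x w cX vX a0 conn tau0 wpos wbal hder i0 z0 (conj z0X z0A)).
Qed.
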